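(* Let $N\ge1$ and $\Gamma_N=\{0,\dots,N-1\}^2\subset\mathbb{Z}^2$, and take $c^+=N-1$, $c^-=0$ so that $d^+_0$ and $d^-_0$ are the main diagonals of $\Gamma_N$. Then, with all functions restricted to $\Gamma_N$: (i) for $N=1$, $\{H^+_{\geq0}\}$ is a basis of $\mathcal{H}^{\Gamma_N}_\mathbb{Z}$; (ii) for $N$ even, $\{H^+_{\geq i},H^+_{\leq -i},H^-_{\geq i},H^-_{\leq -i}\}_{i=1,\dots,N-1}$ is a basis of $\mathcal{H}^{\Gamma_N}_\mathbb{Z}$; (iii) for $N\ge3$ odd, $\{H^+_{\geq0},H^+_{\leq-1},H^-_{\geq1},H^-_{\leq-1}\}\cup\{H^+_{\geq i},H^+_{\leq -i},H^-_{\geq i},H^-_{\leq -i}\}_{i=2,\dots,N-1}$ is a basis of $\mathcal{H}^{\Gamma_N}_\mathbb{Z}$.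
   Context: Adjacency $\sim$ is nearest-neighbor adjacency in $\mathbb{Z}^2$. For finite $\Gamma$, $(\Delta_\Gamma f)(v)=\sum_{w\in\Gamma,\,w\sim v}f(w)-4f(v)$, $\partial\Gamma$ is the set of vertices of $\Gamma$ with a neighbor outside $\Gamma$, and $\mathcal{H}^\Gamma_\mathbb{Z}$ is the module of $H:\Gamma\to\mathbb{Z}$ with $(\Delta_\Gamma H)(v)=0$ for all $v\in\Gamma\setminus\partial\Gamma$. A function $H:\mathbb{Z}^2\to\mathbb{Z}$ is harmonic on $\mathbb{Z}^2$ if $4H(v)=\sum_{w\sim v}H(w)$ for all $v$. Diagonals: $d^+_i=\{(x,y)\in\mathbb{Z}^2: x+y=i+c^+\}$, $d^-_i=\{(x,y): x-y=i+c^-\}$. $H^+_{\geq i}$ denotes any integer-valued harmonic function on $\mathbb{Z}^2$ that vanishes on $d^+_k$ for all $k<i$ and takes values in $\{+1,-1\}$ on $d^+_i$ (its values on each diagonal $d^+_k$, $k>i$, are determined by one freely chosen value on that diagonal, any choice allowed); $H^+_{\leq i}$ is defined likewise but vanishing on $d^+_k$ for all $k>i$; $H^-_{\geq i},H^-_{\leq i}$ likewise with $d^-$ in place of $d^+$. *)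

(* Defs.v *)
From HB Require Import structures.
From mathcomp Require Import all_boot all_order all_algebra.
Set Implicit Arguments. Unset Strict Implicit. Unset Printing Implicit Defensive.
Import Order.TTheory GRing.Theory Num.Theory.
Local Open Scope ring_scope.

Definition pt := (int * int)%type.

Definition nbrs (v : pt) : seq pt :=
  [:: (v.1 + 1, v.2); (v.1 - 1, v.2); (v.1, v.2 + 1); (v.1, v.2 - 1)].

Definition inGamma (N : nat) (v : pt) : bool :=
  (0 <= v.1 < N%:Z) && (0 <= v.2 < N%:Z).

Definition boundary (N : nat) (v : pt) : bool :=
  inGamma N v && has (fun w => ~~ inGamma N w) (nbrs v).

Definition lapGamma (N : nat) (f : pt -> int) (v : pt) : int :=
  \sum_(w <- nbrs v | inGamma N w) f w - 4 * f v.

(* membership in H^Gamma_Z (functions on Gamma_N, represented by functions on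
   Z^2 whose values outside Gamma_N are irrelevant) *)
Definition harmGammaZ (N : nat) (f : pt -> int) : Prop :=
  forall v, inGamma N v -> ~~ boundary N v -> lapGamma N f v = 0.

Definition harmZ2 (H : pt -> int) : Prop :=
  forall v, 4 * H v = \sum_(w <- nbrs v) H w.

Definition dplus (c : int) (i : int) (v : pt) : bool := v.1 + v.2 == i + c.
Definition dminus (c : int) (i : int) (v : pt) : bool := v.1 - v.2 == i + c.

Definition Hge (d : int -> pt -> bool) (i : int) (H : pt -> int) : Prop :=
  [/\ harmZ2 H,
      (forall k v, k < i -> d k v -> H v = 0) &
      (forall v, d i v -> H v = 1 \/ H v = -1)].

Definition Hle (d : int -> pt -> bool) (i : int) (H : pt -> int) : Prop :=
  [/\ harmZ2 H,
      (forall k v, i < k -> d k v -> H v = 0) &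
      (forall v, d i v -> H v = 1 \/ H v = -1)].

Definition isBasis (N : nat) (I : finType) (F : I -> pt -> int) : Prop :=
  [/\ (forall j, harmGammaZ N (F j)),
      (forall c : I -> int,
          (forall v, inGamma N v -> \sum_j c j * F j v = 0) -> forall j, c j = 0) &
      (forall f, harmGammaZ N f ->
          exists c : I -> int, forall v, inGamma N v -> f v = \sum_j c j * F j v)].

Definition fam4 (T : Type) (A B C D : pt -> int) (F : T -> pt -> int)
  (x : 'I_4 + T) : pt -> int :=
  match x with
  | inl k => nth A [:: A; B; C; D] k
  | inr t => F t
  end.

(* Main.v *)
Require Import Defs.
From HB Require Import structures.
From mathcomp Require Import all_boot all_order all_algebra.
From mathcomp Require Import zify ring lra.
Import Order.TTheory GRing.Theory Num.Theory.
Local Open Scope ring_scope.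

Definition harmI (N : nat) (f : pt -> int) : Prop :=
  forall x y : int, 1 <= x -> x <= N%:Z - 2 -> 1 <= y -> y <= N%:Z - 2 ->
    f (x + 1, y) + f (x - 1, y) + f (x, y + 1) + f (x, y - 1) = 4 * f (x, y).

Lemma harmGammaZ_harmI N f : harmGammaZ N f -> harmI N f.
Proof.
move=> H x y x1 x2 y1 y2.
have G : inGamma N (x, y) by rewrite /inGamma /=; apply/andP; split; apply/andP; split; lia.
have nb : ~~ boundary N (x, y).
  rewrite /boundary G /= /inGamma /=.
  have -> : (0 <= x + 1) && (x + 1 < N%:Z) = true by apply/andP; split; lia.
  have -> : (0 <= x - 1) && (x - 1 < N%:Z) = true by apply/andP; split; lia.
  have -> : (0 <= y + 1) && (y + 1 < N%:Z) = true by apply/andP; split; lia.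
  have -> : (0 <= y - 1) && (y - 1 < N%:Z) = true by apply/andP; split; lia.
  have -> : (0 <= x) && (x < N%:Z) = true by apply/andP; split; lia.
  have -> : (0 <= y) && (y < N%:Z) = true by apply/andP; split; lia.
  by [].
have := H _ G nb; rewrite /lapGamma /nbrs !big_cons big_nil /= /inGamma /=.
have -> : (0 <= x + 1) && (x + 1 < N%:Z) = true by apply/andP; split; lia.
have -> : (0 <= x - 1) && (x - 1 < N%:Z) = true by apply/andP; split; lia.
have -> : (0 <= y + 1) && (y + 1 < N%:Z) = true by apply/andP; split; lia.
have -> : (0 <= y - 1) && (y - 1 < N%:Z) = true by apply/andP; split; lia.
have -> : (0 <= x) && (x < N%:Z) = true by apply/andP; split; lia.
have -> : (0 <= y) && (y < N%:Z) = true by apply/andP; split; lia.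
rewrite /= addr0 => /eqP; rewrite subr_eq0 => /eqP <-; ring.
Qed.

Lemma harmZ2_harmGammaZ N H : harmZ2 H -> harmGammaZ N H.
Proof.
move=> hH v G nb.
have A : forall w, w \in nbrs v -> inGamma N w.
  move=> w wi; apply: contraNT nb => nw; rewrite /boundary G andTb; apply/hasP; by exists w.
rewrite /lapGamma.
have -> : \sum_(w <- nbrs v | inGamma N w) H w = \sum_(w <- nbrs v) H w.
  rewrite big_seq_cond [RHS]big_seq; apply: eq_bigl => w.
  case wi: (w \in nbrs v) => //=; by rewrite (A w wi).
by rewrite -hH subrr.
Qed.

Lemma harmI_comb N (I : finType) (F : I -> pt -> int) (c : I -> int) f :
  harmI N f -> (forall j, harmI N (F j)) ->
  harmI N (fun v => f v - \sum_j c j * F j v).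
Proof.
move=> hf hF x y x1 x2 y1 y2 /=.
have E : forall a b d e : int, forall g : I -> int, forall h : I -> int, forall k : I -> int, forall l : I -> int,
   (a - \sum_j g j) + (b - \sum_j h j) + (d - \sum_j k j) + (e - \sum_j l j)
   = (a + b + d + e) - \sum_j (g j + h j + k j + l j).
  move=> a b d e g h k l; rewrite !big_split /=; ring.
rewrite E hf // mulrBr; congr (_ - _); rewrite mulr_sumr; apply: eq_bigr => j _.
rewrite -!mulrDr (hF j) //; ring.
Qed.
Lemma sq_pm1 (a : int) : a = 1 \/ a = -1 -> a * a = 1.
Proof. by case=> ->. Qed.

Lemma tri_basis N (I : finType) (F : I -> pt -> int) (p : I -> pt) (r : I -> nat) :
  (forall j, harmGammaZ N (F j)) ->
  (forall j, inGamma N (p j)) ->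
  (forall j, F j (p j) = 1 \/ F j (p j) = -1) ->
  (forall j k, j != k -> (r k <= r j)%N -> F j (p k) = 0) ->
  (forall g, harmI N g -> (forall k, g (p k) = 0) -> forall v, inGamma N v -> g v = 0) ->
  isBasis N F.
Proof.
move=> hF hp hd htri huniq; split => //.
- move=> c hc.
  suff S : forall n j, (r j < n)%N -> c j = 0 by move=> j; apply: (S (r j).+1).
  elim=> [//|n IH] j rj.
  have := hc _ (hp j); rewrite (bigD1 j) //=.
  rewrite big1 ?addr0.
    move/eqP; rewrite mulf_eq0 => /orP [/eqP //|/eqP E].
    by move: (hd j); rewrite E; case.
  move=> k kj; case: (ltnP (r k) (r j)) => rk.
    by rewrite IH ?mul0r //; apply: leq_trans rk _.
  by rewrite htri ?mulr0 // eq_sym.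
- move=> f hf.
  have hfI := harmGammaZ_harmI _ _ hf.
  have hFI := fun j => harmGammaZ_harmI _ _ (hF j).
  suff S : forall t, exists c : I -> int, forall k, (r k < t)%N ->
             f (p k) - \sum_j c j * F j (p k) = 0.
    have [c hc] := S (\max_k r k).+1.
    exists c => v vG.
    have := huniq _ (harmI_comb _ _ _ c _ hfI hFI) _ v vG.
    move=> H; apply/eqP; rewrite -subr_eq0; apply/eqP; apply: H => k.
    by apply: hc; rewrite ltnS; apply: (leq_bigmax k).
  elim=> [|t [c hc]].
    by exists (fun _ => 0).
  pose g v := f v - \sum_j c j * F j v.
  exists (fun j => c j + (if r j == t then F j (p j) * g (p j) else 0)) => k rk.
  have E : \sum_j (c j + (if r j == t then F j (p j) * g (p j) else 0)) * F j (p k)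
      = \sum_j c j * F j (p k) + (if r k == t then g (p k) else 0).
    under eq_bigr do rewrite mulrDl.
    rewrite big_split /=; congr (_ + _).
    case rkt: (r k == t).
      rewrite (bigD1 k) //= rkt big1 ?addr0.
        by rewrite mulrC mulrA sq_pm1 ?mul1r.
      move=> j jk; case rjt: (r j == t); last by rewrite mul0r.
      by rewrite (htri j k) ?mulr0 // (eqP rjt) (eqP rkt).
    apply: big1 => j _; case rjt: (r j == t); last by rewrite mul0r.
    rewrite (htri j k) ?mulr0 //.
      by apply: contraFN rkt => /eqP <-.
    by rewrite (eqP rjt) -ltnS.
  rewrite E opprD addrA.
  case rkt: (r k == t).
    by rewrite /g subrr.
  rewrite subr0; apply: hc; by rewrite ltn_neqAle rkt -ltnS.
Qed.

Lemma harmI_at N g x y : harmI N g -> 1 <= x -> x <= N%:Z - 2 -> 1 <= y -> y <= N%:Z - 2 ->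
  forall p1 p2 p3 p4 : pt, p1 = (x + 1, y) -> p2 = (x - 1, y) -> p3 = (x, y + 1) -> p4 = (x, y - 1) ->
  g p1 + g p2 + g p3 + g p4 = 4 * g (x, y).
Proof. by move=> h *; subst; apply: h. Qed.

Lemma inG N (x y : int) : 0 <= x -> x < N%:Z -> 0 <= y -> y < N%:Z -> inGamma N (x, y).
Proof. by move=> *; rewrite /inGamma /=; apply/andP; split; apply/andP; split. Qed.

Lemma inG_inv N (v : pt) : inGamma N v -> [/\ 0 <= v.1, v.1 < N%:Z, 0 <= v.2 & v.2 < N%:Z].
Proof. by case/andP => /andP [? ?] /andP [? ?]. Qed.

Lemma prop_up N g (s : int) : harmI N g -> N%:Z <= s ->
  (forall v, inGamma N v -> v.1 + v.2 = s - 1 -> g v = 0) ->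
  (forall v, inGamma N v -> v.1 + v.2 = s - 2 -> g v = 0) ->
  (inGamma N (N%:Z - 1, s - N%:Z + 1) -> g (N%:Z - 1, s - N%:Z + 1) = 0) ->
  forall v, inGamma N v -> v.1 + v.2 = s -> g v = 0.
Proof.
move=> hg sN z1 z2 z0.
suff S : forall t : nat, inGamma N (N%:Z - 1 - t%:Z, s - N%:Z + 1 + t%:Z) ->
            g (N%:Z - 1 - t%:Z, s - N%:Z + 1 + t%:Z) = 0.
  case=> a b vG /= hab.
  have [t ht] : exists t : nat, t%:Z = N%:Z - 1 - a.
    exists (absz (N%:Z - 1 - a)%R); case/inG_inv: vG => /= *; lia.
  have E : (a, b) = (N%:Z - 1 - t%:Z, s - N%:Z + 1 + t%:Z) by congr pair; lia.
  by rewrite E; apply: S; rewrite -E.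
elim=> [|t IH].
  have E : (N%:Z - 1 - 0%:Z, s - N%:Z + 1 + 0%:Z) = (N%:Z - 1, s - N%:Z + 1) by congr pair; lia.
  by rewrite E; apply: z0.
move=> G; case/inG_inv: (G) => /= ? ? ? ?.
have hv : g (N%:Z - 1 - t%:Z, s - N%:Z + 1 + t%:Z) = 0 by apply: IH; apply: inG; lia.
have hw : g (N%:Z - 2 - t%:Z, s - N%:Z + 1 + t%:Z) = 0 by apply: z1; [apply: inG; lia | rewrite /=; lia].
have h2 : g (N%:Z - 3 - t%:Z, s - N%:Z + 1 + t%:Z) = 0 by apply: z2; [apply: inG; lia | rewrite /=; lia].
have h4 : g (N%:Z - 2 - t%:Z, s - N%:Z + t%:Z) = 0 by apply: z2; [apply: inG; lia | rewrite /=; lia].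
have := harmI_at _ g (N%:Z - 2 - t%:Z) (s - N%:Z + 1 + t%:Z) hg ltac:(lia) ltac:(lia) ltac:(lia) ltac:(lia)
   (N%:Z - 1 - t%:Z, s - N%:Z + 1 + t%:Z) (N%:Z - 3 - t%:Z, s - N%:Z + 1 + t%:Z)
   (N%:Z - 1 - t.+1%:Z, s - N%:Z + 1 + t.+1%:Z) (N%:Z - 2 - t%:Z, s - N%:Z + t%:Z).
rewrite hv hw h2 h4 => H.
have := H ltac:(congr pair; lia) ltac:(congr pair; lia) ltac:(congr pair; lia) ltac:(congr pair; lia).
by rewrite mulr0 !add0r addr0.
Qed.

Definition rot N (v : pt) : pt := (N%:Z - 1 - v.1, N%:Z - 1 - v.2).

Lemma harmI_rot N g : harmI N g -> harmI N (fun v => g (rot N v)).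
Proof.
move=> h x y x1 x2 y1 y2 /=; rewrite /rot /=.
have := harmI_at _ g (N%:Z - 1 - x) (N%:Z - 1 - y) h ltac:(lia) ltac:(lia) ltac:(lia) ltac:(lia)
  (N%:Z - 1 - (x - 1), N%:Z - 1 - y) (N%:Z - 1 - (x + 1), N%:Z - 1 - y)
  (N%:Z - 1 - x, N%:Z - 1 - (y - 1)) (N%:Z - 1 - x, N%:Z - 1 - (y + 1))
  ltac:(congr pair; lia) ltac:(congr pair; lia) ltac:(congr pair; lia) ltac:(congr pair; lia).
move=> <-; ring.
Qed.

Lemma inG_rot N v : inGamma N v -> inGamma N (rot N v).
Proof. case/inG_inv => *; apply: inG; rewrite /=; lia. Qed.

Lemma rotK N v : rot N (rot N v) = v.
Proof. case: v => a b; rewrite /rot /=; congr pair; lia. Qed.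

Lemma prop_down N g (s : int) : harmI N g -> s <= N%:Z - 2 ->
  (forall v, inGamma N v -> v.1 + v.2 = s + 1 -> g v = 0) ->
  (forall v, inGamma N v -> v.1 + v.2 = s + 2 -> g v = 0) ->
  (inGamma N (0, s) -> g (0, s) = 0) ->
  forall v, inGamma N v -> v.1 + v.2 = s -> g v = 0.
Proof.
move=> hg sN z1 z2 z0 v vG hv.
have := prop_up N (fun v => g (rot N v)) (2 * N%:Z - 2 - s) (harmI_rot _ _ hg) ltac:(lia).
move=> H; rewrite -(rotK N v); apply: H.
- move=> w wG hw; apply: z1; first exact: inG_rot.
  rewrite /rot /=; lia.
- move=> w wG hw; apply: z2; first exact: inG_rot.
  rewrite /rot /=; lia.
- have E : rot N (N%:Z - 1, 2 * N%:Z - 2 - s - N%:Z + 1) = (0, s) by rewrite /rot /=; congr pair; lia.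
  by move=> G; rewrite E; apply: z0; rewrite -E; apply: inG_rot.
- exact: inG_rot.
- rewrite /rot /=; lia.
Qed.

Definition pivot (N t i : nat) : pt :=
  match t with
  | 0%N => if (i <= 1)%N then ((N %/ 2)%N%:Z, (N %/ 2)%N%:Z) else (N%:Z - 1, i%:Z)
  | 1%N => (0, N%:Z - 1 - i%:Z)
  | 2%N => (((N + i) %/ 2)%N%:Z, ((N + i) %/ 2)%N%:Z - i%:Z)
  | _ => (((N + i) %/ 2)%N%:Z - i%:Z, ((N + i) %/ 2)%N%:Z)
  end.

Definition rank (N t i : nat) : nat :=
  match t with
  | 0%N => if (i <= 1)%N then 0%N else (N + i)%N
  | 1%N => (N + i)%N
  | _ => i
  end.

Definition validt (N t i : nat) : bool :=
  match t with
  | 0%N => ((i <= 1)%N && (i + N %% 2 == 1)%N) || ((2 <= i)%N && (i <= N - 1)%N)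
  | 1%N | 2%N | 3%N => (1 <= i)%N && (i <= N - 1)%N
  | _ => false
  end.

Lemma uniq_piv N g : (2 <= N)%N -> harmI N g ->
  (forall t i, validt N t i -> g (pivot N t i) = 0) ->
  forall v, inGamma N v -> g v = 0.
Proof.
move=> N2 hg hz.
pose Z s := forall v, inGamma N v -> v.1 + v.2 = s -> g v = 0.
have base : Z (N%:Z - 1) /\ Z N%:Z.
  suff : forall v, inGamma N v -> (v.1 + v.2 = N%:Z - 1 \/ v.1 + v.2 = N%:Z) -> g v = 0.
    by move=> H; split=> v vG hv; apply: H => //; [left|right].
  case=> a b vG /= hab; case/inG_inv: vG => /= a0 aN b0 bN.
  case: (ltgtP a b) => [ab|ab|ab].
  - have [i hi] : exists i : nat, i%:Z = b - a by exists (absz (b - a)%R); lia.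
    have E : (a, b) = pivot N 3 i by rewrite /pivot; congr pair; lia.
    by rewrite E; apply: hz; rewrite /validt; apply/andP; split; lia.
  - have [i hi] : exists i : nat, i%:Z = a - b by exists (absz (a - b)%R); lia.
    have E : (a, b) = pivot N 2 i by rewrite /pivot; congr pair; lia.
    by rewrite E; apply: hz; rewrite /validt; apply/andP; split; lia.
  - have E : (a, b) = pivot N 0 (1 - N %% 2) by rewrite /pivot ifT; [congr pair; lia | lia].
    rewrite E; apply: hz; rewrite /validt; apply/orP; left; apply/andP; split; lia.
have up : forall k : nat, Z (N%:Z - 1 + k%:Z) /\ Z (N%:Z + k%:Z).
  elim=> [|k [IH1 IH2]].
    by rewrite !addr0.
  split.
    by move=> v vG hv; apply: IH2 => //; lia.
  move=> v vG hv; apply: (prop_up N g (N%:Z + k.+1%:Z)) => //; try lia.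
  - by move=> w wG hw; apply: IH2 => //; lia.
  - by move=> w wG hw; apply: IH1 => //; lia.
  - move=> G; case/inG_inv: G => /= *.
    have E : (N%:Z - 1, N%:Z + k.+1%:Z - N%:Z + 1) = pivot N 0 k.+2 by rewrite /pivot /=; congr pair; lia.
    by rewrite E; apply: hz; rewrite /validt; apply/orP; right; apply/andP; split; lia.
have down : forall k : nat, Z (N%:Z - 1 - k%:Z) /\ Z (N%:Z - k%:Z).
  elim=> [|k [IH1 IH2]].
    by rewrite !subr0; case: base.
  split; last first.
    by move=> v vG hv; apply: IH1 => //; lia.
  move=> v vG hv; apply: (prop_down N g (N%:Z - 1 - k.+1%:Z)) => //; try lia.
  - by move=> w wG hw; apply: IH1 => //; lia.
  - by move=> w wG hw; apply: IH2 => //; lia.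
  - move=> G; case/inG_inv: G => /= *.
    have E : (0, N%:Z - 1 - k.+1%:Z) = pivot N 1 k.+1 by rewrite /pivot.
    by rewrite E; apply: hz; rewrite /validt; apply/andP; split; lia.
case=> a b vG; case/inG_inv: (vG) => /= *.
case: (lerP (N%:Z - 1) (a + b)) => h.
  have [k hk] : exists k : nat, k%:Z = a + b - (N%:Z - 1) by exists (absz (a + b - (N%:Z - 1))%R); lia.
  by case: (up k) => H _; apply: H => //=; lia.
have [k hk] : exists k : nat, k%:Z = N%:Z - 1 - (a + b) by exists (absz (N%:Z - 1 - (a + b))%R); lia.
by case: (down k) => H _; apply: H => //=; lia.
Qed.

Definition propt (N t i : nat) (H : pt -> int) : Prop :=
  match t with
  | 0%N => Hge (dplus (N%:Z - 1)) i%:Z H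
  | 1%N => Hle (dplus (N%:Z - 1)) (- i%:Z) H
  | 2%N => Hge (dminus 0) i%:Z H
  | _ => Hle (dminus 0) (- i%:Z) H
  end.

Lemma propt_harm N t i H : propt N t i H -> harmZ2 H.
Proof. by case: t => [|[|[|t]]] /= []. Qed.

Lemma propt_zero N t i H (v : pt) : propt N t i H ->
  match t with
  | 0%N => v.1 + v.2 < i%:Z + (N%:Z - 1)
  | 1%N => - i%:Z + (N%:Z - 1) < v.1 + v.2
  | 2%N => v.1 - v.2 < i%:Z + 0
  | _ => - i%:Z + 0 < v.1 - v.2
  end -> H v = 0.
Proof.
case: t => [|[|[|t]]] /= [_ hz _] h.
- by apply: (hz (v.1 + v.2 - (N%:Z - 1))); [lia | rewrite /dplus; apply/eqP; lia].
- by apply: (hz (v.1 + v.2 - (N%:Z - 1))); [lia | rewrite /dplus; apply/eqP; lia].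
- by apply: (hz (v.1 - v.2 - 0)); [lia | rewrite /dminus; apply/eqP; lia].
- by apply: (hz (v.1 - v.2 - 0)); [lia | rewrite /dminus; apply/eqP; lia].
Qed.

Lemma propt_lead N t i H (v : pt) : propt N t i H ->
  match t with
  | 0%N => v.1 + v.2 = i%:Z + (N%:Z - 1)
  | 1%N => v.1 + v.2 = - i%:Z + (N%:Z - 1)
  | 2%N => v.1 - v.2 = i%:Z + 0
  | _ => v.1 - v.2 = - i%:Z + 0
  end -> H v = 1 \/ H v = -1.
Proof.
case: t => [|[|[|t]]] /= [_ _ hl] h; apply: hl.
- by rewrite /dplus; apply/eqP.
- by rewrite /dplus; apply/eqP.
- by rewrite /dminus; apply/eqP.
- by rewrite /dminus; apply/eqP.
Qed.

Lemma piv_ok N t i H : (2 <= N)%N -> validt N t i -> propt N t i H ->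
  inGamma N (pivot N t i) /\ (H (pivot N t i) = 1 \/ H (pivot N t i) = -1).
Proof.
move=> N2 vt pt; split.
  case: t vt {pt} => [|[|[|[|t]]]] //= vt; rewrite /pivot; try case: ifP => hi; apply: inG; lia.
apply: (propt_lead _ _ _ _ _ pt).
case: t vt {pt} => [|[|[|[|t]]]] //= vt; rewrite /pivot; try case: ifP => hi /=; lia.
Qed.

Lemma piv_tri N t i t' i' H : (2 <= N)%N -> validt N t i -> validt N t' i' ->
  (t != t') || (i != i') -> (rank N t' i' <= rank N t i)%N -> propt N t i H ->
  H (pivot N t' i') = 0.
Proof.
move=> N2 vt vt' ne rk pt; apply: (propt_zero _ _ _ _ _ pt).
case: t vt ne rk {pt} => [|[|[|[|t]]]] //= vt;
case: t' vt' => [|[|[|[|t']]]] //= vt' ne; rewrite /rank /pivot /=;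
try case: ifP => hi; try case: ifP => hi'; move=> rk /=; lia.
Qed.

Lemma family_basis N (I : finType) (F : I -> pt -> int) (tg : I -> nat * nat) :
  (2 <= N)%N -> injective tg ->
  (forall j, validt N (tg j).1 (tg j).2 /\ propt N (tg j).1 (tg j).2 (F j)) ->
  (forall t i, validt N t i -> exists j, tg j = (t, i)) ->
  isBasis N F.
Proof.
move=> N2 itg hj hcov.
apply: (tri_basis N I F (fun j => pivot N (tg j).1 (tg j).2) (fun j => rank N (tg j).1 (tg j).2)).
- move=> j; case: (hj j) => _ h; exact: harmZ2_harmGammaZ (propt_harm _ _ _ _ h).
- move=> j; case: (hj j) => v h; by case: (piv_ok _ _ _ _ N2 v h).
- move=> j; case: (hj j) => v h; by case: (piv_ok _ _ _ _ N2 v h).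
- move=> j k jk rk; case: (hj j) => v h; case: (hj k) => v' _.
  apply: (piv_tri _ _ _ _ _ _ N2 v v') => //.
  have : tg j != tg k by apply: contra jk => /eqP /itg ->.
  case: (tg j) => a b; case: (tg k) => c d /=.
  by apply: contraR; rewrite negb_or !negbK => /andP [/eqP -> /eqP ->].
- move=> g hg hz; apply: uniq_piv => // t i vt.
  by case: (hcov t i vt) => j E; have := hz j; rewrite E.
Qed.

Definition code (b1 b2 : bool) : nat :=
  if b1 then (if b2 then 0%N else 1%N) else (if b2 then 2%N else 3%N).

Lemma code_inj b1 b2 b1' b2' : code b1 b2 = code b1' b2' -> b1 = b1' /\ b2 = b2'.
Proof. by case: b1; case: b2; case: b1'; case: b2'. Qed.

Lemma code_lt4 b1 b2 : (code b1 b2 < 4)%N.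
Proof. by case: b1; case: b2. Qed.

Lemma code_surj t : (t < 4)%N -> exists b1 b2, code b1 b2 = t.
Proof.
case: t => [|[|[|[|t]]]] // _.
- by exists true, true.
- by exists true, false.
- by exists false, true.
- by exists false, false.
Qed.

Lemma propt_code N b1 b2 (i : nat) H :
  let dP := dplus (N%:Z - 1) in let dM := dminus 0 in
  (if b1 then (if b2 then Hge dP i%:Z H else Hle dP (- i%:Z) H)
   else (if b2 then Hge dM i%:Z H else Hle dM (- i%:Z) H)) ->
  propt N (code b1 b2) i H.
Proof. by case: b1; case: b2. Qed.

Theorem corollary7 (N : nat) (HN : (1 <= N)%N) :
  let dP := dplus (N%:Z - 1) in
  let dM := dminus 0 in
  (* (i) *)
  [/\ (N = 1%N -> forall H, Hge dP 0 H -> isBasis N (fun _ : 'I_1 => H)),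
  (* (ii) *)
      (~~ odd N -> forall F : bool * bool * 'I_(N - 1) -> pt -> int,
          (forall j : 'I_(N - 1),
             let i := (j.+1)%:Z in
             [/\ Hge dP i (F (true, true, j)), Hle dP (- i) (F (true, false, j)),
                 Hge dM i (F (false, true, j)) & Hle dM (- i) (F (false, false, j))]) ->
          isBasis N F) &
  (* (iii) *)
      (odd N -> (3 <= N)%N ->
        forall (A B C D : pt -> int) (F : bool * bool * 'I_(N - 2) -> pt -> int),
          Hge dP 0 A -> Hle dP (-1) B -> Hge dM 1 C -> Hle dM (-1) D ->
          (forall j : 'I_(N - 2),
             let i := (j.+2)%:Z in
             [/\ Hge dP i (F (true, true, j)), Hle dP (- i) (F (true, false, j)),
                 Hge dM i (F (false, true, j)) & Hle dM (- i) (F (false, false, j))]) ->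
          isBasis N (fam4 A B C D F))].
Proof.
move=> dP dM; split.
- move=> N1 H hH; subst N.
  apply: (tri_basis 1 _ _ (fun _ => (0, 0)) (fun _ => 0%N)).
  + move=> _; apply: harmZ2_harmGammaZ; by case: hH.
  + by move=> _; apply: inG.
  + move=> _; have := propt_lead 1 0 0 H (0, 0) hH; apply; by [].
  + by move=> j k; rewrite !ord1 eqxx.
  + move=> g _ hz [a b] vG; case/inG_inv: vG => /= *.
    have -> : (a, b) = (0, 0) by congr pair; lia.
    exact: hz ord0.
- move=> ev F hF.
  have N2 : (2 <= N)%N by case: N HN ev dP dM F hF => [|[|N]].
  have ev2 : (N %% 2 = 0)%N by rewrite modn2; move: ev; case: (odd N).
  apply: (family_basis N _ F (fun x => (code x.1.1 x.1.2, (x.2).+1)%N)) => //.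
  + move=> [[b1 b2] j] [[b1' b2'] j'] /= [/code_inj [-> ->] E].
    by congr (_, _, _); apply: val_inj.
  + move=> [[b1 b2] j] /=; split.
      by have := ltn_ord j; case: b1; case: b2 => /= jl; lia.
    apply: propt_code; case: (hF j) => h1 h2 h3 h4; by case: b1; case: b2.
  + move=> t i vt.
    have t4 : (t < 4)%N by case: t vt => [|[|[|[|t]]]].
    have [b1 [b2 hb]] := code_surj t t4.
    have hi : (i.-1 < N - 1)%N.
      move: vt; case: t {hb t4} => [|[|[|[|t]]]] //= ; lia.
    exists (b1, b2, Ordinal hi); rewrite /= hb; congr pair.
    move: vt; case: t {hb t4 hi} => [|[|[|[|t]]]] //= ; lia.
- move=> od N3 A B C D F hA hB hC hD hF.
  have N2 : (2 <= N)%N by apply: leq_trans N3.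
  have od2 : (N %% 2 = 1)%N by rewrite modn2 od.
  pose tg := fun x : 'I_4 + bool * bool * 'I_(N - 2) => match x with
    | inl k => nth (0, 0)%N [:: (0, 0); (1, 1); (2, 1); (3, 1)]%N k
    | inr y => (code y.1.1 y.1.2, (y.2).+2)%N end.
  apply: (family_basis N _ _ tg) => //.
  + move=> [[[|[|[|[|k]]]] hk]|[[b1 b2] j]] [[[|[|[|[|k']]]] hk']|[[b1' b2'] j']] //= E;
    try (by congr inl; apply: val_inj);
    try (by case: E => _ /eqP; lia);
    try (by case: E => _ /eqP; lia);
    try (by case: b1 E; case: b2);
    try (by case: b1' E; case: b2').
    case: E => /code_inj [-> ->] E.
    by congr (inr (_, _, _)); apply: val_inj => /=; lia.
  + move=> [[[|[|[|[|k]]]] hk]|[[b1 b2] j]] //=.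
    * split; [lia | exact: hA].
    * split; [lia | exact: hB].
    * split; [lia | exact: hC].
    * split; [lia | exact: hD].
    split; first by have := ltn_ord j; case: b1; case: b2 => /= jl; lia.
    apply: propt_code; case: (hF j) => h1 h2 h3 h4; by case: b1; case: b2.
  + move=> t i vt.
    case: (leqP i 1) => i1.
      case: t vt => [|[|[|[|t]]]] //= vt.
      * exists (inl (@Ordinal 4 0 isT)); rewrite /tg /=; congr pair; lia.
      * exists (inl (@Ordinal 4 1 isT)); rewrite /tg /=; congr pair; lia.
      * exists (inl (@Ordinal 4 2 isT)); rewrite /tg /=; congr pair; lia.
      * exists (inl (@Ordinal 4 3 isT)); rewrite /tg /=; congr pair; lia.
    have t4 : (t < 4)%N by case: t vt => [|[|[|[|t]]]].
    have [b1 [b2 hb]] := code_surj t t4.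
    have hi : (i - 2 < N - 2)%N.
      move: vt; case: t {hb t4} => [|[|[|[|t]]]] //= ; lia.
    exists (inr (b1, b2, Ordinal hi)); rewrite /tg /= hb; congr pair; lia.
Qed.
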